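(* Let $F$ be a smooth distribution supported on $[0,1]$ with convex CDF (i.e. non-decreasing PDF $f$), and let $\epsilon>0$. Suppose we have access to a perturbed oracle $F^*$ which, when queried at $x$, returns $F^*(x)=F(x+\epsilon_1)+\epsilon_2$ for some unknown $\epsilon_1\in[-\epsilon^2/2,\epsilon^2/2]$ and $\epsilon_2\in[-\epsilon,\epsilon]$ (which may differ from query to query). Then $\tilde{O}(\epsilon^{-1/2})$ queries to $F^*$ suffice to learn $F$ within Lévy distance $O(\epsilon)$.
   Context: A distribution is smooth if it has no point masses and its PDF $f$ is $C^1$. Learning within Lévy distance $\eta$ means outputting $\hat F$ with $\mathrm{L\acute{e}vy}(F,\hat F)\le\eta$, where $\mathrm{L\acute{e}vy}(F,G)=\inf\{\epsilon: F(v-\epsilon)-\epsilon\le G(v)\le F(v+\epsilon)+\epsilon\ \forall v\}$. $\tilde{O}$ hides polylog$(1/\epsilon)$ factors. *)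

(* Defs.v *)
From Stdlib Require Import Reals List.
From Coquelicot Require Import Coquelicot.
Open Scope R_scope.

(** A smooth distribution supported on [0,1] with convex CDF, given by its
    CDF [F] and PDF [f]:
    - [F] is the CDF of a distribution supported on [0,1]: F = 0 on (-oo,0],
      F = 1 on [1,+oo), F non-decreasing;
    - no point masses: F is continuous everywhere;
    - the PDF f is C^1 on [0,1]: F' = f and f' = g on (0,1), g continuous on
      (0,1) with finite one-sided limits at 0 and 1 (i.e. f' extends
      continuously to [0,1]);
    - convex CDF, i.e. f non-decreasing on (0,1). *)
Definition smooth_convex_cdf (F f : R -> R) : Prop :=
  (forall x, x <= 0 -> F x = 0) /\
  (forall x, 1 <= x -> F x = 1) /\
  (forall x y, x <= y -> F x <= F y) /\
  (forall x, continuous F x) /\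
  (exists g : R -> R,
     (forall x, 0 < x < 1 -> is_derive F x (f x)) /\
     (forall x, 0 < x < 1 -> is_derive f x (g x)) /\
     (forall x, 0 < x < 1 -> continuous g x) /\
     (exists l0, filterlim g (at_right 0) (locally l0)) /\
     (exists l1, filterlim g (at_left 1) (locally l1))) /\
  (forall x y, 0 < x -> x <= y -> y < 1 -> f x <= f y).

Definition levy_cond (F G : R -> R) (e : R) : Prop :=
  forall v, F (v - e) - e <= G v <= F (v + e) + e.

Definition levy (F G : R -> R) : Rbar :=
  Glb_Rbar (fun e => 0 <= e /\ levy_cond F G e).

Definition valid_answer (eps : R) (F : R -> R) (x a : R) : Prop :=
  exists e1 e2, Rabs e1 <= eps ^ 2 / 2 /\ Rabs e2 <= eps /\ a = F (x + e1) + e2.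

(** A deterministic adaptive query algorithm: it makes [nq] queries, the next
    query point being a function of the answers received so far, and finally
    outputs a hypothesis CDF as a function of all answers. *)
Record query_alg := QueryAlg {
  nq : nat;
  next_query : list R -> R;
  output : list R -> (R -> R)
}.

(** [ans] is a possible full transcript of answers of the perturbed oracle
    (the adversary may choose the perturbations differently at each query,
    adaptively). *)
Definition consistent_run (eps : R) (F : R -> R) (A : query_alg) (ans : list R) : Prop :=
  length ans = nq A /\
  forall i, (i < nq A)%nat ->
    valid_answer eps F (next_query A (firstn i ans)) (nth i ans 0).

(* Main.v *)
Require Import Defs.
From Stdlib Require Import Reals List Lra Lia Psatz ZArith.
From Stdlib Require Import ClassicalEpsilon Classical.
From Coquelicot Require Import Coquelicot.
Open Scope R_scope.

Lemma scc_F0 F f : smooth_convex_cdf F f -> forall x, x <= 0 -> F x = 0.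
Proof. intros H; apply H. Qed.
Lemma scc_F1 F f : smooth_convex_cdf F f -> forall x, 1 <= x -> F x = 1.
Proof. intros H; apply H. Qed.
Lemma scc_mono F f : smooth_convex_cdf F f -> forall x y, x <= y -> F x <= F y.
Proof. intros H; apply H. Qed.
Lemma scc_cont F f : smooth_convex_cdf F f -> forall x, continuity_pt F x.
Proof. intros H x; apply continuity_pt_filterlim. apply H. Qed.

Lemma scc_range F f : smooth_convex_cdf F f -> forall x, 0 <= F x <= 1.
Proof.
  intros H x. pose proof (scc_mono F f H) as M.
  split.
  - rewrite <- (scc_F0 F f H (Rmin x 0)) by apply Rmin_r. apply M, Rmin_l.
  - rewrite <- (scc_F1 F f H (Rmax x 1)) by apply Rmax_r. apply M, Rmax_l.
Qed.

Lemma scc_mvt F f : smooth_convex_cdf F f -> forall a b, 0 <= a < b -> b <= 1 ->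
  exists c, a < c < b /\ F b - F a = f c * (b - a).
Proof.
  intros H a b [Ha Hab] Hb.
  destruct H as (_ & _ & _ & Hc & (g & Hd & _) & _).
  assert (pr1 : forall c, a < c < b -> derivable_pt F c).
  { intros c Pc. exists (f c). apply is_derive_Reals. apply Hd. lra. }
  assert (E : forall c P, derive_pt F c (pr1 c P) = f c).
  { intros c P. apply derive_pt_eq_0. apply is_derive_Reals. apply Hd. lra. }
  destruct (MVT F id a b pr1 (fun c _ => derivable_pt_id c) Hab) as (c & P & Hc').
  - intros c _. apply continuity_pt_filterlim. apply Hc.
  - intros c _. apply derivable_continuous_pt. apply derivable_pt_id.
  - exists c. split; [exact P|]. rewrite E, derive_pt_id in Hc'. unfold id in Hc'. lra.
Qed.

Lemma scc_conv3 F f : smooth_convex_cdf F f -> forall a c b, 0 <= a < c -> c < b -> b <= 1 ->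
  (F c - F a) * (b - c) <= (F b - F c) * (c - a).
Proof.
  intros H a c b H1 H2 H3.
  destruct (scc_mvt F f H a c) as (c1 & P1 & E1); [lra|lra|].
  destruct (scc_mvt F f H c b) as (c2 & P2 & E2); [lra|lra|].
  destruct H as (_ & _ & _ & _ & _ & Hf).
  assert (f c1 <= f c2) by (apply Hf; lra).
  rewrite E1, E2. assert (0 < (c - a) * (b - c)) by (apply Rmult_lt_0_compat; lra).
  replace (f c1 * (c - a) * (b - c)) with (f c1 * ((c - a) * (b - c))) by ring.
  replace (f c2 * (b - c) * (c - a)) with (f c2 * ((c - a) * (b - c))) by ring.
  apply Rmult_le_compat_r; lra.
Qed.

Lemma scc_conv F f : smooth_convex_cdf F f -> forall a b t, 0 <= a <= 1 -> 0 <= b <= 1 -> 0 <= t <= 1 ->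
  F ((1 - t) * a + t * b) <= (1 - t) * F a + t * F b.
Proof.
  intros H.
  assert (K : forall a b t, 0 <= a -> a < b -> b <= 1 -> 0 < t < 1 ->
     F ((1 - t) * a + t * b) <= (1 - t) * F a + t * F b).
  { intros a b t Ha Hab Hb Ht. set (c := (1 - t) * a + t * b).
    assert (a < c) by (unfold c; nra). assert (c < b) by (unfold c; nra).
    pose proof (scc_conv3 F f H a c b) as K. 
    assert (Eb : b - c = (1 - t) * (b - a)) by (unfold c; ring).
    assert (Ea : c - a = t * (b - a)) by (unfold c; ring).
    rewrite Eb, Ea in K. assert (0 < b - a) by lra.
    assert (K2 : ((F c - F a) * (1 - t) - (F b - F c) * t) * (b - a) <= 0) by nra.
    assert ((F c - F a) * (1 - t) - (F b - F c) * t <= 0).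
    { destruct (Rle_dec ((F c - F a) * (1 - t) - (F b - F c) * t) 0); auto. nra. }
    nra. }
  intros a b t Ha Hb Ht.
  destruct (Req_dec t 0) as [->|Ht0]. { replace ((1-0)*a + 0*b) with a by ring. lra. }
  destruct (Req_dec t 1) as [->|Ht1]. { replace ((1-1)*a + 1*b) with b by ring. lra. }
  destruct (Rtotal_order a b) as [Hl|[He|Hg]].
  - apply K; lra.
  - subst. replace ((1 - t) * b + t * b) with b by ring. lra.
  - replace ((1 - t) * a + t * b) with ((1 - (1-t)) * b + (1-t) * a) by ring.
    pose proof (K b a (1 - t)) as K'. lra.
Qed.
Lemma Phi_strict F f : smooth_convex_cdf F f -> forall x y, x < y -> x + F x < y + F y.
Proof. intros H x y Hxy. pose proof (scc_mono F f H x y). lra. Qed.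

Lemma Phi_surj F f : smooth_convex_cdf F f -> forall u, exists x, x + F x = u.
Proof.
  intros H u.
  destruct (Rle_dec u 0) as [Hu|Hu].
  { exists u. rewrite (scc_F0 F f H u Hu). ring. }
  destruct (Rle_dec 2 u) as [Hu2|Hu2].
  { exists (u - 1). rewrite (scc_F1 F f H (u-1)) by lra. ring. }
  assert (C : continuity (fun x => x + F x - u)).
  { intros x. apply continuity_pt_minus. apply continuity_pt_plus.
    apply continuity_pt_id. apply (scc_cont F f H). apply continuity_pt_const. intros a b; reflexivity. }
  destruct (IVT _ 0 1 C) as (z & _ & Hz).
  - lra.
  - rewrite (scc_F0 F f H 0) by lra. lra.
  - rewrite (scc_F1 F f H 1) by lra. lra.
  - exists z. lra.
Qed.

Definition Xi (F : R -> R) (u : R) : R := epsilon (inhabits 0) (fun x => x + F x = u).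

Lemma Xi_spec F f : smooth_convex_cdf F f -> forall u, Xi F u + F (Xi F u) = u.
Proof. intros H u. unfold Xi. apply epsilon_spec. apply (Phi_surj F f H). Qed.

Lemma Xi_unique F f : smooth_convex_cdf F f -> forall u x, x + F x = u -> Xi F u = x.
Proof.
  intros H u x Hx. pose proof (Xi_spec F f H u) as S.
  destruct (Rtotal_order (Xi F u) x) as [L|[E|G]]; auto.
  - pose proof (Phi_strict F f H _ _ L). lra.
  - pose proof (Phi_strict F f H _ _ G). lra.
Qed.

Lemma Xi_le F f : smooth_convex_cdf F f -> forall u v, u <= v -> Xi F u <= Xi F v.
Proof.
  intros H u v Huv. destruct (Rle_dec (Xi F u) (Xi F v)) as [|N]; auto.
  assert (Xi F v < Xi F u) by lra. pose proof (Phi_strict F f H _ _ H0).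
  rewrite !(Xi_spec F f H) in H1. lra.
Qed.

Lemma Xi_lip F f : smooth_convex_cdf F f -> forall u v, u <= v -> Xi F v - Xi F u <= v - u.
Proof.
  intros H u v Huv. pose proof (Xi_le F f H u v Huv).
  pose proof (scc_mono F f H _ _ H0).
  pose proof (Xi_spec F f H u). pose proof (Xi_spec F f H v). lra.
Qed.

Lemma Xi_0 F f : smooth_convex_cdf F f -> Xi F 0 = 0.
Proof. intros H. apply (Xi_unique F f H). rewrite (scc_F0 F f H 0); lra. Qed.
Lemma Xi_2 F f : smooth_convex_cdf F f -> Xi F 2 = 1.
Proof. intros H. apply (Xi_unique F f H). rewrite (scc_F1 F f H 1); lra. Qed.

Lemma Xi_range F f : smooth_convex_cdf F f -> forall u, 0 <= u <= 2 -> 0 <= Xi F u <= 1.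
Proof.
  intros H u Hu. rewrite <- (Xi_0 F f H), <- (Xi_2 F f H).
  split; apply (Xi_le F f H); lra.
Qed.

Lemma Xi_conc2 F f : smooth_convex_cdf F f -> forall u1 u2 t, 0 <= u1 <= 2 -> 0 <= u2 <= 2 -> 0 <= t <= 1 ->
  (1 - t) * Xi F u1 + t * Xi F u2 <= Xi F ((1 - t) * u1 + t * u2).
Proof.
  intros H u1 u2 t H1 H2 Ht.
  set (xb := (1 - t) * Xi F u1 + t * Xi F u2).
  pose proof (scc_conv F f H (Xi F u1) (Xi F u2) t (Xi_range F f H u1 H1) (Xi_range F f H u2 H2) Ht) as C.
  fold xb in C.
  pose proof (Xi_spec F f H u1). pose proof (Xi_spec F f H u2).
  pose proof (Xi_spec F f H ((1 - t) * u1 + t * u2)) as S.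
  destruct (Rle_dec xb (Xi F ((1 - t) * u1 + t * u2))) as [|N]; auto.
  assert (L : Xi F ((1 - t) * u1 + t * u2) < xb) by lra.
  pose proof (Phi_strict F f H _ _ L). exfalso.
  assert (xb + F xb <= (1 - t) * u1 + t * u2).
  { unfold xb at 1. nra. }
  lra.
Qed.

Lemma Xi_conc3 F f : smooth_convex_cdf F f -> forall a b c, 0 <= a -> a <= b -> b <= c -> c <= 2 ->
  (c - b) * Xi F a + (b - a) * Xi F c <= (c - a) * Xi F b.
Proof.
  intros H a b c Ha Hab Hbc Hc.
  destruct (Req_dec a c) as [E|NE].
  { subst. assert (b = c) by lra. subst. lra. }
  set (t := (b - a) / (c - a)).
  assert (Ht : 0 <= t <= 1).
  { assert (0 < c - a) by lra.
    assert (Et : t * (c - a) = b - a) by (unfold t; field; lra).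
    split. unfold t; apply Rdiv_le_0_compat; lra.
    destruct (Rle_dec t 1); auto. nra. }
  assert (Eb : b = (1 - t) * a + t * c).
  { unfold t. field. lra. }
  pose proof (Xi_conc2 F f H a c t) as K. rewrite <- Eb in K.
  assert (E1 : (c - b) = (1 - t) * (c - a)) by (rewrite Eb; ring).
  assert (E2 : (b - a) = t * (c - a)) by (rewrite Eb; ring).
  rewrite E1, E2.
  assert (0 < c - a) by lra.
  assert ((1 - t) * Xi F a + t * Xi F c <= Xi F b) by (apply K; lra).
  nra.
Qed.
Lemma Rabs_le_inv x a : Rabs x <= a -> -a <= x <= a.
Proof. unfold Rabs; destruct (Rcase_abs x); lra. Qed.

Definition strat := list R -> R.
Definition bindS (L : nat) (P1 : strat) (P2 : list R -> strat) : strat :=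
  fun l => if Nat.ltb (length l) L then P1 l else P2 (firstn L l) (skipn L l).
Definition valid_run (eps : R) (F : R -> R) (P : strat) (l : list R) : Prop :=
  forall i, (i < length l)%nat -> valid_answer eps F (P (firstn i l)) (nth i l 0).

Lemma valid_bind eps F L P1 P2 l : valid_run eps F (bindS L P1 P2) l -> (L <= length l)%nat ->
  valid_run eps F P1 (firstn L l) /\ valid_run eps F (P2 (firstn L l)) (skipn L l).
Proof.
  intros V HL. split.
  - intros i Hi. rewrite length_firstn in Hi.
    assert (Hi' : (i < L)%nat) by lia.
    rewrite firstn_firstn. replace (Init.Nat.min i L) with i by lia.
    assert (E : nth i (firstn L l) 0 = nth i l 0).
    { rewrite nth_firstn. destruct (Nat.ltb i L) eqn:E; auto. apply Nat.ltb_ge in E. lia. }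
    rewrite E. specialize (V i ltac:(lia)). unfold bindS in V.
    rewrite length_firstn in V. replace (Nat.min i (length l)) with i in V by lia.
    destruct (Nat.ltb_spec i L); [exact V|lia].
  - intros i Hi. rewrite length_skipn in Hi.
    specialize (V (L + i)%nat ltac:(lia)). unfold bindS in V.
    rewrite length_firstn in V. replace (Nat.min (L + i) (length l)) with (L + i)%nat in V by lia.
    destruct (Nat.ltb_spec (L + i) L); [lia|].
    rewrite firstn_firstn in V. replace (Nat.min L (L + i)) with L in V by lia.
    rewrite skipn_firstn_comm in V. replace (L + i - L)%nat with i in V by lia.
    rewrite nth_skipn. exact V.
Qed.

Lemma valid_snoc eps F P l a : valid_run eps F P (l ++ a :: nil) ->
  valid_run eps F P l /\ valid_answer eps F (P l) a.
Proof.
  intros V. split.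
  - intros i Hi. specialize (V i). rewrite length_app in V. simpl in V.
    specialize (V ltac:(lia)). rewrite firstn_app in V.
    replace (i - length l)%nat with 0%nat in V by lia. simpl in V. rewrite app_nil_r in V.
    rewrite app_nth1 in V by lia. exact V.
  - specialize (V (length l)). rewrite length_app in V. simpl in V.
    specialize (V ltac:(lia)). rewrite firstn_app in V. rewrite Nat.sub_diag in V. simpl in V.
    rewrite app_nil_r, firstn_all in V. rewrite nth_middle in V. exact V.
Qed.

Definition bis_step (u : R) (s : R * R) (a : R) : R * R :=
  let m := (fst s + snd s) / 2 in if Rlt_dec (m + a) u then (m, snd s) else (fst s, m).
Definition bis_state (u : R) (l : list R) : R * R := fold_left (bis_step u) l (0, 1).
Definition Bis (u : R) : strat := fun l => (fst (bis_state u l) + snd (bis_state u l)) / 2.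
Definition bis_res (u : R) (l : list R) : R := fst (bis_state u l).

Lemma bis_inv eps F f : smooth_convex_cdf F f -> 0 < eps < 1 -> forall u, 0 <= u <= 2 ->
  forall l, valid_run eps F (Bis u) l ->
  fst (bis_state u l) <= Xi F (u + eps) + eps ^ 2 / 2 /\
  Xi F (u - eps) - eps ^ 2 / 2 <= snd (bis_state u l) /\
  snd (bis_state u l) - fst (bis_state u l) = (/ 2) ^ (length l).
Proof.
  intros H He u Hu l. induction l as [|a l IH] using rev_ind; intros V.
  - unfold bis_state; simpl. pose proof (Xi_le F f H 0 (u + eps)).
    pose proof (Xi_le F f H (u - eps) 2). rewrite (Xi_0 F f H) in H0. rewrite (Xi_2 F f H) in H1.
    assert (0 <= eps ^ 2 / 2) by (apply Rdiv_le_0_compat; [apply pow2_ge_0|lra]).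
    split; [|split]; simpl; try lra.
  - destruct (valid_snoc _ _ _ _ _ V) as [V1 Va]. destruct (IH V1) as (I1 & I2 & I3).
    unfold bis_state in *. rewrite fold_left_app. simpl fold_left.
    set (s := fold_left (bis_step u) l (0, 1)) in *.
    unfold Bis, bis_state in Va. fold s in Va.
    destruct Va as (e1 & e2 & He1 & He2 & Ea).
    rewrite length_app. simpl length. rewrite Nat.add_1_r. simpl pow.
    unfold bis_step. set (m := (fst s + snd s) / 2) in *.
    apply Rabs_le_inv in He1. apply Rabs_le_inv in He2.
    destruct (Rlt_dec (m + a) u) as [Lt|Ge]; simpl.
    + split; [|split]; [|lra|unfold m; lra].
      destruct (Rle_dec m (Xi F (u + eps) + eps ^ 2 / 2)) as [|N]; auto. exfalso.
      assert (Xi F (u + eps) <= m + e1) by lra.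
      pose proof (scc_mono F f H _ _ H0). pose proof (Xi_spec F f H (u + eps)). lra.
    + split; [|split]; [lra| |unfold m; lra].
      destruct (Rle_dec (Xi F (u - eps) - eps ^ 2 / 2) m) as [|N]; auto. exfalso.
      assert (m + e1 <= Xi F (u - eps)) by lra.
      pose proof (scc_mono F f H _ _ H0). pose proof (Xi_spec F f H (u - eps)). lra.
Qed.

Lemma bis_ok eps F f : smooth_convex_cdf F f -> 0 < eps < 1 -> forall u, 0 <= u <= 2 ->
  forall l, valid_run eps F (Bis u) l ->
  Rabs (bis_res u l - Xi F u) <= eps + eps ^ 2 / 2 + (/ 2) ^ (length l).
Proof.
  intros H He u Hu l V. destruct (bis_inv eps F f H He u Hu l V) as (I1 & I2 & I3).
  unfold bis_res.
  assert (A1 : u - eps <= u) by lra. assert (A2 : u <= u + eps) by lra.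
  pose proof (Xi_lip F f H u (u + eps) A2). pose proof (Xi_lip F f H (u - eps) u A1).
  pose proof (Xi_le F f H u (u + eps) A2). pose proof (Xi_le F f H (u - eps) u A1).
  assert (0 <= eps ^ 2 / 2) by (apply Rdiv_le_0_compat; [apply pow2_ge_0|lra]).
  assert (0 <= (/ 2) ^ length l) by (apply pow_le; lra).
  set (w := (/ 2) ^ length l) in *. set (ee := eps ^ 2 / 2) in *. clearbody w ee.
  unfold Rabs; destruct Rcase_abs; lra.
Qed.

Fixpoint iterS {St : Type} (L : nat) (P : St -> strat) (upd : St -> list R -> St) (n : nat) (s : St) : strat :=
  match n with
  | O => fun _ => 0
  | S n' => bindS L (P s) (fun l1 => iterS L P upd n' (upd s l1))
  end.

Fixpoint iterNodes {St : Type} (L : nat) (g : St -> list R -> list (R * R)) (upd : St -> list R -> St)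
  (n : nat) (s : St) (l : list R) : list (R * R) :=
  match n with
  | O => nil
  | S n' => g s (firstn L l) ++ iterNodes L g upd n' (upd s (firstn L l)) (skipn L l)
  end.

Definition tm1 (s : R * R) : R := fst s + (snd s - fst s) / 3.
Definition tm2 (s : R * R) : R := fst s + 2 * (snd s - fst s) / 3.
Definition tupd (N : nat) (q : R) (s : R * R) (l : list R) : R * R :=
  let x1 := bis_res (tm1 s) (firstn N l) in
  let x2 := bis_res (tm2 s) (skipn N l) in
  if Rle_dec (x2 - q * tm2 s) (x1 - q * tm1 s) then (fst s, tm2 s) else (tm1 s, snd s).
Definition TernStep (N : nat) (s : R * R) : strat := bindS N (Bis (tm1 s)) (fun _ => Bis (tm2 s)).
Definition tnodes (N : nat) (s : R * R) (l : list R) : list (R * R) :=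
  (tm1 s, bis_res (tm1 s) (firstn N l)) :: (tm2 s, bis_res (tm2 s) (skipn N l)) :: nil.

Definition good_node (F : R -> R) (dd : R) (z : R * R) : Prop :=
  0 <= fst z <= 2 /\ Rabs (snd z - Xi F (fst z)) <= dd.

Definition psi (F : R -> R) (q t : R) : R := Xi F t - q * t.

Lemma psi_lip F f : smooth_convex_cdf F f -> forall q t m, 0 <= q <= 2 ->
  psi F q t <= psi F q m + 2 * Rabs (t - m).
Proof.
  intros H q t m Hq. unfold psi.
  destruct (Rle_dec m t) as [L|L].
  - pose proof (Xi_lip F f H m t L). rewrite Rabs_right by lra. nra.
  - assert (t <= m) by lra. pose proof (Xi_le F f H t m H0). rewrite Rabs_left by lra. nra.
Qed.

Lemma psi_conc3 F f : smooth_convex_cdf F f -> forall q a b c, 0 <= a -> a <= b -> b <= c -> c <= 2 ->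
  (c - b) * psi F q a + (b - a) * psi F q c <= (c - a) * psi F q b.
Proof.
  intros H q a b c H1 H2 H3 H4. pose proof (Xi_conc3 F f H a b c H1 H2 H3 H4). unfold psi. nra.
Qed.

Lemma tern_step eps F f N q : smooth_convex_cdf F f -> 0 < eps < 1 -> 0 <= q <= 2 ->
  forall s l1, 0 <= fst s <= snd s -> snd s <= 2 ->
  valid_run eps F (TernStep N s) l1 -> length l1 = (2 * N)%nat ->
  let dd := eps + eps ^ 2 / 2 + (/ 2) ^ N in
  let s' := tupd N q s l1 in
  (forall z, In z (tnodes N s l1) -> good_node F dd z) /\
  fst s <= fst s' /\ fst s' <= snd s' /\ snd s' <= snd s /\
  snd s' - fst s' = 2 / 3 * (snd s - fst s) /\
  fst s' <= tm1 s <= snd s' /\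
  (forall t, fst s <= t <= snd s ->
     (fst s' <= t <= snd s') \/
     (exists z, In z (tnodes N s l1) /\ psi F q t <= psi F q (fst z) + 2 * dd)).
Proof.
  intros H He Hq s l1 Hs1 Hs2 V Hl dd s'.
  destruct (valid_bind eps F N _ _ l1 V) as [V1 V2]; [lia|].
  assert (Hm1 : 0 <= tm1 s <= 2) by (unfold tm1; lra).
  assert (Hm2 : 0 <= tm2 s <= 2) by (unfold tm2; lra).
  pose proof (bis_ok eps F f H He (tm1 s) Hm1 _ V1) as B1.
  pose proof (bis_ok eps F f H He (tm2 s) Hm2 _ V2) as B2.
  rewrite length_firstn in B1. rewrite length_skipn in B2.
  replace (Nat.min N (length l1)) with N in B1 by lia.
  replace (length l1 - N)%nat with N in B2 by lia.
  fold dd in B1, B2.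
  set (x1 := bis_res (tm1 s) (firstn N l1)) in *.
  set (x2 := bis_res (tm2 s) (skipn N l1)) in *.
  assert (Gd : forall z, In z (tnodes N s l1) -> good_node F dd z).
  { intros z Hz. unfold tnodes in Hz. simpl in Hz. destruct Hz as [<-|[<-|[]]]; split; simpl; auto. }
  split; [exact Gd|].
  apply Rabs_le_inv in B1. apply Rabs_le_inv in B2.
  assert (Ha : tm1 s <= tm2 s) by (unfold tm1, tm2; lra).
  unfold s', tupd. fold x1 x2.
  destruct (Rle_dec (x2 - q * tm2 s) (x1 - q * tm1 s)) as [C|C]; simpl.
  - split; [lra|]. split; [unfold tm2; lra|]. split; [unfold tm2; lra|].
    split; [unfold tm2; lra|]. split; [unfold tm1, tm2; lra|].
    intros t Ht. destruct (Rle_dec t (tm2 s)) as [L|L]; [left; lra|right].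
    exists (tm2 s, x2). split; [unfold tnodes; simpl; auto|]. simpl.
    assert (P : psi F q (tm2 s) <= psi F q (tm1 s) + 2 * dd) by (unfold psi; lra).
    pose proof (psi_conc3 F f H q (tm1 s) (tm2 s) t ltac:(lra) Ha ltac:(lra) ltac:(lra)) as K.
    assert (E : tm2 s - tm1 s = (snd s - fst s) / 3) by (unfold tm1, tm2; field).
    assert (T1 : t - tm2 s <= tm2 s - tm1 s) by (unfold tm1, tm2 in *; lra).
    assert (T0 : 0 < tm2 s - tm1 s) by lra.
    assert (0 <= dd) by (pose proof (Rabs_pos (x1 - Xi F (tm1 s))); lra).
    assert ((tm2 s - tm1 s) * (psi F q t - psi F q (tm2 s)) <= (tm2 s - tm1 s) * (2 * dd)).
    { apply Rle_trans with ((t - tm2 s) * (psi F q (tm2 s) - psi F q (tm1 s))); [nra|].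
      apply Rle_trans with ((t - tm2 s) * (2 * dd)); [apply Rmult_le_compat_l; lra|].
      apply Rmult_le_compat_r; lra. }
    apply Rmult_le_reg_l in H1; lra.
  - split; [unfold tm1; lra|]. split; [unfold tm1; lra|]. split; [lra|].
    split; [unfold tm1; lra|]. split; [unfold tm1; lra|].
    intros t Ht. destruct (Rle_dec (tm1 s) t) as [L|L]; [left; lra|right].
    exists (tm1 s, x1). split; [unfold tnodes; simpl; auto|]. simpl.
    assert (P : psi F q (tm1 s) <= psi F q (tm2 s) + 2 * dd) by (unfold psi; lra).
    pose proof (psi_conc3 F f H q t (tm1 s) (tm2 s) ltac:(lra) ltac:(lra) Ha ltac:(lra)) as K.
    assert (T1 : tm1 s - t <= tm2 s - tm1 s) by (unfold tm1, tm2 in *; lra).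
    assert (T0 : 0 < tm2 s - tm1 s) by (unfold tm1, tm2 in *; lra).
    assert (0 <= dd) by (pose proof (Rabs_pos (x1 - Xi F (tm1 s))); lra).
    assert ((tm2 s - tm1 s) * (psi F q t - psi F q (tm1 s)) <= (tm2 s - tm1 s) * (2 * dd)).
    { apply Rle_trans with ((tm1 s - t) * (psi F q (tm1 s) - psi F q (tm2 s))); [nra|].
      apply Rle_trans with ((tm1 s - t) * (2 * dd)); [apply Rmult_le_compat_l; lra|].
      apply Rmult_le_compat_r; lra. }
    apply Rmult_le_reg_l in H1; lra.
Qed.

Lemma tern_ok eps F f N q : smooth_convex_cdf F f -> 0 < eps < 1 -> 0 <= q <= 2 ->
  forall n s l, 0 <= fst s <= snd s -> snd s <= 2 ->
  valid_run eps F (iterS (2 * N) (TernStep N) (tupd N q) (S n) s) l ->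
  length l = (S n * (2 * N))%nat ->
  let dd := eps + eps ^ 2 / 2 + (/ 2) ^ N in
  let nodes := iterNodes (2 * N) (tnodes N) (tupd N q) (S n) s l in
  (forall z, In z nodes -> good_node F dd z) /\
  (forall t, fst s <= t <= snd s -> exists z, In z nodes /\
     psi F q t <= psi F q (fst z) + 2 * dd + 2 * ((2 / 3) ^ (S n) * (snd s - fst s))).
Proof.
  intros H He Hq n. induction n as [|n IH]; intros s l Hs1 Hs2 V Hl dd nodes.
  - unfold nodes. cbn [iterNodes]. cbn [iterS] in V.
    destruct (valid_bind eps F _ _ _ l V) as [V1 _]; [lia|].
    assert (L1 : length (firstn (2 * N) l) = (2 * N)%nat) by (rewrite length_firstn; lia).
    destruct (tern_step eps F f N q H He Hq s _ Hs1 Hs2 V1 L1) as (G & A1 & A2 & A3 & A4 & A5 & A6).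
    fold dd in G, A6. split; [intros z Hz; apply in_app_or in Hz; destruct Hz as [Hz|[]]; auto|].
    intros t Ht.
    assert (Hd : 0 <= dd) by (unfold dd; pose proof (pow_le (/2) N ltac:(lra)); pose proof (pow2_ge_0 eps); lra).
    destruct (A6 t Ht) as [In1|(z & Hz & Pz)].
    + exists (tm1 s, bis_res (tm1 s) (firstn N (firstn (2 * N) l))). split; [apply in_or_app; left; unfold tnodes; simpl; auto|].
      simpl fst. pose proof (psi_lip F f H q t (tm1 s) Hq).
      assert (Rabs (t - tm1 s) <= 2 / 3 * (snd s - fst s)) by (apply Rabs_le; lra).
      simpl pow. lra.
    + exists z. split; [apply in_or_app; auto|]. simpl pow.
      assert (0 <= 2 / 3 * 1 * (snd s - fst s)) by lra. lra.
  - unfold nodes. cbn [iterNodes]. cbn [iterS] in V.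
    destruct (valid_bind eps F _ _ _ l V) as [V1 V2]; [lia|].
    assert (L1 : length (firstn (2 * N) l) = (2 * N)%nat) by (rewrite length_firstn; lia).
    destruct (tern_step eps F f N q H He Hq s _ Hs1 Hs2 V1 L1) as (G & A1 & A2 & A3 & A4 & A5 & A6).
    set (s' := tupd N q s (firstn (2 * N) l)) in *.
    assert (L2 : length (skipn (2 * N) l) = (S n * (2 * N))%nat) by (rewrite length_skipn; lia).
    destruct (IH s' (skipn (2 * N) l) ltac:(lra) ltac:(lra) V2 L2) as [IG IC].
    fold dd in G, A6, IG, IC. split.
    + intros z Hz. apply in_app_or in Hz. destruct Hz; auto.
    + intros t Ht.
      assert (Hd : 0 <= dd) by (unfold dd; pose proof (pow_le (/2) N ltac:(lra)); pose proof (pow2_ge_0 eps); lra).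
      destruct (A6 t Ht) as [In1|(z & Hz & Pz)].
      * destruct (IC t In1) as (z & Hz & Pz). exists z. split; [apply in_or_app; auto|].
        rewrite A4 in Pz. replace ((2 / 3) ^ S (S n) * (snd s - fst s)) with ((2 / 3) ^ S n * (2 / 3 * (snd s - fst s))) by (simpl; ring). exact Pz.
      * exists z. split; [apply in_or_app; auto|].
        assert (0 <= (2 / 3) ^ S (S n) * (snd s - fst s)) by (apply Rmult_le_pos; [apply pow_le|]; lra).
        lra.
Qed.

Definition gpos (m i : nat) : R := 2 * INR i / INR m.

Definition seg (v : R) (z1 z2 : R * R) : R :=
  let x1 := snd z1 in let y1 := fst z1 - snd z1 in
  let x2 := snd z2 in let y2 := fst z2 - snd z2 in
  y1 + (y2 - y1) * ((v - x1) / (x2 - x1)).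

Definition seg_ok (v : R) (p : (R * R) * (R * R)) : bool :=
  if Rle_dec (snd (fst p)) v then (if Rle_dec v (snd (snd p)) then true else false) else false.

Definition Gout (tau : R) (Z : list (R * R)) (v : R) : R :=
  if Rlt_dec v tau then 0 else
  fold_right (fun p acc => if seg_ok v p then Rmin (seg v (fst p) (snd p)) acc else acc) 1 (list_prod Z Z).

Lemma seg_ok_true v p : seg_ok v p = true <-> snd (fst p) <= v <= snd (snd p).
Proof.
  unfold seg_ok. destruct (Rle_dec (snd (fst p)) v); destruct (Rle_dec v (snd (snd p))); split; intros; try lra; try discriminate; auto.
Qed.

Lemma fold_lower v (B : R) (Lp : list ((R * R) * (R * R))) :
  B <= 1 -> (forall p, In p Lp -> seg_ok v p = true -> B <= seg v (fst p) (snd p)) ->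
  B <= fold_right (fun p acc => if seg_ok v p then Rmin (seg v (fst p) (snd p)) acc else acc) 1 Lp.
Proof.
  intros H1 H2. induction Lp as [|p Lp IH]; simpl; auto.
  assert (B <= fold_right (fun p acc => if seg_ok v p then Rmin (seg v (fst p) (snd p)) acc else acc) 1 Lp).
  { apply IH. intros; apply H2; simpl; auto. }
  destruct (seg_ok v p) eqn:E; auto.
  apply Rmin_glb; auto. apply H2; simpl; auto.
Qed.

Lemma fold_le1 v (Lp : list ((R * R) * (R * R))) :
  fold_right (fun p acc => if seg_ok v p then Rmin (seg v (fst p) (snd p)) acc else acc) 1 Lp <= 1.
Proof.
  induction Lp as [|p Lp IH]; simpl; [lra|]. destruct (seg_ok v p); auto.
  eapply Rle_trans; [apply Rmin_r|]; auto.
Qed.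

Lemma fold_upper v p (Lp : list ((R * R) * (R * R))) : In p Lp -> seg_ok v p = true ->
  fold_right (fun p acc => if seg_ok v p then Rmin (seg v (fst p) (snd p)) acc else acc) 1 Lp <= seg v (fst p) (snd p).
Proof.
  induction Lp as [|p' Lp IH]; simpl; [tauto|]. intros [<-|Hin] Hok.
  - rewrite Hok. apply Rmin_l.
  - destruct (seg_ok v p'); auto. eapply Rle_trans; [apply Rmin_r|]; auto.
Qed.

Lemma seg_lower F f dd : smooth_convex_cdf F f -> 0 <= dd -> forall v z1 z2,
  good_node F dd z1 -> good_node F dd z2 -> snd z1 <= v <= snd z2 ->
  F (v - dd) - dd <= seg v z1 z2.
Proof.
  intros H Hd v [u1 x1] [u2 x2] [G1a G1b] [G2a G2b] Hv. simpl in *.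
  apply Rabs_le_inv in G1b. apply Rabs_le_inv in G2b. unfold seg; simpl.
  destruct (Req_dec x1 x2) as [E|NE].
  - subst x2. assert (v = x1) by lra. subst v. replace (x1 - x1) with 0 by ring.
    unfold Rdiv. rewrite Rmult_0_l, Rmult_0_r, Rplus_0_r.
    pose proof (Xi_spec F f H u1). pose proof (scc_mono F f H (x1 - dd) (Xi F u1) ltac:(lra)). lra.
  - set (mu := (v - x1) / (x2 - x1)).
    assert (Hmu : 0 <= mu <= 1).
    { assert (0 < x2 - x1) by lra. assert (Em : mu * (x2 - x1) = v - x1) by (unfold mu; field; lra).
      split; [unfold mu; apply Rdiv_le_0_compat; lra|]. destruct (Rle_dec mu 1); auto; nra. }
    assert (Ev : v = (1 - mu) * x1 + mu * x2) by (unfold mu; field; lra).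
    set (uQ := (1 - mu) * u1 + mu * u2).
    pose proof (Xi_conc2 F f H u1 u2 mu G1a G2a Hmu) as C. fold uQ in C.
    pose proof (Xi_spec F f H uQ) as S.
    assert (Xi F uQ >= v - dd) by nra.
    pose proof (scc_mono F f H (v - dd) (Xi F uQ) ltac:(lra)).
    assert (E2 : u1 - x1 + (u2 - x2 - (u1 - x1)) * mu = uQ - v) by (rewrite Ev; unfold uQ; ring).
    rewrite E2. lra.
Qed.

Lemma nat_ceil y : 0 <= y -> exists k : nat, y < INR k <= y + 1.
Proof.
  intros Hy. destruct (archimed y) as [A1 A2].
  assert (Hz : (0 <= up y)%Z).
  { apply le_IZR. lra. }
  exists (Z.to_nat (up y)). rewrite INR_IZR_INZ, Z2Nat.id by exact Hz. lra.
Qed.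

Lemma nat_floor y : 0 <= y -> exists i : nat, INR i <= y < INR i + 1.
Proof.
  intros Hy. destruct (archimed y) as [A1 A2].
  assert (Hz : (1 <= up y)%Z).
  { apply le_IZR. assert (0 < IZR (up y)) by lra.
    assert (0 < up y)%Z by (apply lt_IZR; lra). apply IZR_le. lia. }
  exists (Z.to_nat (up y - 1)). rewrite INR_IZR_INZ, Z2Nat.id by lia.
  rewrite minus_IZR. simpl. lra.
Qed.

Lemma chord1D F f m D (Z : list (R * R)) dd : smooth_convex_cdf F f -> (1 <= INR m) -> 0 <= D ->
  (forall z, In z Z -> good_node F dd z) ->
  (forall k, (k <= S m)%nat -> forall t, 0 <= t <= 2 ->
     exists z, In z Z /\ psi F (INR k / INR m) t <= psi F (INR k / INR m) (fst z) + D) ->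
  forall a b u, 0 <= a -> a < b -> b <= 2 -> (forall z, In z Z -> fst z <= a \/ b <= fst z) ->
  a <= u <= b ->
  Xi F u <= Xi F a + (Xi F b - Xi F a) * ((u - a) / (b - a)) + D + (b - a) / INR m.
Proof.
  intros H Hm HD HZ1 HZ3 a b u Ha Hab Hb Hsep Hu.
  set (sg := (Xi F b - Xi F a) / (b - a)).
  assert (Hs : sg * (b - a) = Xi F b - Xi F a) by (unfold sg; field; lra).
  assert (Hsg : 0 <= sg <= 1).
  { pose proof (Xi_le F f H a b ltac:(lra)). pose proof (Xi_lip F f H a b ltac:(lra)).
    split; [unfold sg; apply Rdiv_le_0_compat; lra|]. destruct (Rle_dec sg 1); auto; nra. }
  destruct (nat_ceil (sg * INR m)) as (k & Hk1 & Hk2); [nra|].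
  assert (Hkm : (k <= S m)%nat).
  { apply INR_le. rewrite S_INR. nra. }
  set (q := INR k / INR m).
  assert (Hq1 : sg < q) by (unfold q; apply Rmult_lt_reg_r with (INR m); [lra|]; unfold Rdiv; rewrite Rmult_assoc, Rinv_l, Rmult_1_r by lra; lra).
  assert (Hq2 : q <= sg + / INR m).
  { unfold q; apply Rmult_le_reg_r with (INR m); [lra|]. unfold Rdiv.
    rewrite Rmult_assoc, Rinv_l, Rmult_1_r by lra. rewrite Rmult_plus_distr_r, Rinv_l by lra. lra. }
  destruct (HZ3 k Hkm u ltac:(lra)) as (z & Hz & Pz). fold q in Pz.
  destruct (HZ1 z Hz) as [Hzp _].
  set (w := (u - a) / (b - a)).
  assert (Hw : w * (b - a) = u - a) by (unfold w; field; lra).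
  assert (E1 : (Xi F b - Xi F a) * w = sg * (u - a)) by (rewrite <- Hs, <- Hw; ring).
  rewrite E1.
  assert (Hm' : (b - a) / INR m = (b - a) * / INR m) by reflexivity.
  assert (0 < / INR m) by (apply Rinv_0_lt_compat; lra).
  destruct (Hsep z Hz) as [Za|Zb].
  -
    assert (Pa : psi F q u - D <= psi F q a).
    { pose proof (psi_conc3 F f H q (fst z) a u ltac:(lra) Za ltac:(lra) ltac:(lra)) as K.
      destruct (Req_dec u (fst z)) as [E|NE].
      - assert (a = u) by lra. subst a. lra.
      - assert (0 < u - fst z) by lra.
        apply Rmult_le_reg_l with (u - fst z); [lra|]. nra. }
    unfold psi in Pa.
    assert (q * (u - a) <= sg * (u - a) + / INR m * (b - a)).
    { apply Rle_trans with ((sg + / INR m) * (u - a)); [apply Rmult_le_compat_r; lra|]. nra. }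
    rewrite Hm'. lra.
  - assert (Pb : psi F q u - D <= psi F q b).
    { pose proof (psi_conc3 F f H q u b (fst z) ltac:(lra) ltac:(lra) Zb ltac:(lra)) as K.
      destruct (Req_dec u (fst z)) as [E|NE].
      - assert (b = u) by lra. subst b. lra.
      - assert (0 < fst z - u) by lra.
        apply Rmult_le_reg_l with (fst z - u); [lra|]. nra. }
    unfold psi in Pb.
    assert (sg * (u - a) = Xi F b - Xi F a - sg * (b - u)) by nra.
    assert (sg * (b - u) <= q * (b - u)) by (apply Rmult_le_compat_r; lra).
    assert (0 <= (b - a) * / INR m) by (apply Rmult_le_pos; lra).
    rewrite Hm'. lra.
Qed.

Lemma max_below (P : list R) u0 : (exists p, In p P /\ p <= u0) ->
  exists a, In a P /\ a <= u0 /\ forall p, In p P -> p <= u0 -> p <= a.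
Proof.
  induction P as [|p P IH]; intros (p0 & Hp0 & Hle); [destruct Hp0|].
  destruct (classic (exists p, In p P /\ p <= u0)) as [Ex|NEx].
  - destruct (IH Ex) as (a & Ha & Ha1 & Ha2).
    destruct (Rle_dec p u0) as [Hp|Hp].
    + exists (Rmax p a). split; [unfold Rmax; destruct Rle_dec; simpl; auto|].
      split; [apply Rmax_lub; lra|]. intros p' [<-|Hp'] Hl; [apply Rmax_l|].
      eapply Rle_trans; [apply Ha2; auto|apply Rmax_r].
    + exists a. split; [simpl; auto|]. split; auto. intros p' [<-|Hp'] Hl; [lra|auto].
  - exists p. destruct Hp0 as [<-|Hp0]; [|exfalso; apply NEx; eauto].
    split; [simpl; auto|]. split; auto. intros p' [<-|Hp'] Hl; [lra|]. exfalso; apply NEx; eauto.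
Qed.

Lemma min_above (P : list R) u0 : (exists p, In p P /\ u0 <= p) ->
  exists b, In b P /\ u0 <= b /\ forall p, In p P -> u0 <= p -> b <= p.
Proof.
  intros Ex. destruct (max_below (map Ropp P) (- u0)) as (a & Ha & Ha1 & Ha2).
  { destruct Ex as (p & Hp & Hl). exists (- p). split; [apply in_map; auto|lra]. }
  apply in_map_iff in Ha. destruct Ha as (b & <- & Hb).
  exists b. split; auto. split; [lra|]. intros p Hp Hl.
  assert (- p <= - b) by (apply Ha2; [apply in_map; auto|lra]). lra.
Qed.

Lemma grid_below m u0 : 1 <= INR m -> 0 <= u0 <= 2 ->
  exists i, (i <= m)%nat /\ gpos m i <= u0 /\ u0 - gpos m i <= 2 / INR m.
Proof.
  intros Hm Hu. destruct (nat_floor (u0 * INR m / 2)) as (i & Hi1 & Hi2); [apply Rmult_le_pos; [nra|lra]|].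
  exists i. unfold gpos.
  assert (INR i <= INR m) by nra.
  split; [apply INR_le; auto|].
  split.
  - apply Rmult_le_reg_r with (INR m); [lra|]. unfold Rdiv. rewrite Rmult_assoc, Rinv_l, Rmult_1_r by lra. lra.
  - apply Rmult_le_reg_r with (INR m); [lra|]. unfold Rdiv.
    rewrite Rmult_minus_distr_r, !Rmult_assoc, Rinv_l, !Rmult_1_r by lra. lra.
Qed.

Lemma grid_above m u0 : 1 <= INR m -> 0 <= u0 <= 2 ->
  exists j, (j <= m)%nat /\ u0 <= gpos m j /\ gpos m j - u0 <= 2 / INR m.
Proof.
  intros Hm Hu. destruct (nat_floor (u0 * INR m / 2)) as (i & Hi1 & Hi2); [apply Rmult_le_pos; [nra|lra]|].
  assert (Hgi : forall j, gpos m j * INR m = 2 * INR j).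
  { intros j. unfold gpos, Rdiv. rewrite Rmult_assoc, Rinv_l, Rmult_1_r by lra. reflexivity. }
  assert (H2m : 2 / INR m * INR m = 2) by (field; lra).
  destruct (Req_dec (INR i) (u0 * INR m / 2)) as [E|NE].
  - exists i. assert (INR i <= INR m) by nra. split; [apply INR_le; auto|].
    assert (gpos m i = u0).
    { apply Rmult_eq_reg_r with (INR m); [|lra]. rewrite Hgi. lra. }
    split; [lra|]. assert (0 < 2 / INR m) by (apply Rdiv_lt_0_compat; lra). lra.
  - exists (S i). assert (INR i < INR m) by nra. apply INR_lt in H.
    split; [lia|]. split.
    + apply Rmult_le_reg_r with (INR m); [lra|]. rewrite Hgi, S_INR. lra.
    + apply Rmult_le_reg_r with (INR m); [lra|]. rewrite Rmult_minus_distr_r, Hgi, H2m, S_INR. lra.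
Qed.

Lemma seg_comb v z1 z2 : snd z1 < snd z2 ->
  let mu := (v - snd z1) / (snd z2 - snd z1) in
  seg v z1 z2 = (1 - mu) * (fst z1 - snd z1) + mu * (fst z2 - snd z2) /\
  v = (1 - mu) * snd z1 + mu * snd z2.
Proof.
  intros Hlt mu. unfold seg. fold mu. split; [ring|]. unfold mu. field. lra.
Qed.

Lemma levy_from_nodes F f m dd D e tau (Z : list (R * R)) :
  smooth_convex_cdf F f -> 1 <= INR m -> 0 <= dd -> 0 <= D ->
  (forall z, In z Z -> good_node F dd z) ->
  (forall i, (i <= m)%nat -> exists x, In (gpos m i, x) Z) ->
  (forall k, (k <= S m)%nat -> forall t, 0 <= t <= 2 ->
     exists z, In z Z /\ psi F (INR k / INR m) t <= psi F (INR k / INR m) (fst z) + D) ->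
  dd + D + 4 / (INR m * INR m) <= e -> 2 * dd < e -> dd <= tau -> tau <= e ->
  levy_cond F (Gout tau Z) e.
Proof.
  intros H Hm Hd HD HZ1 HZ2 HZ3 He1 He2 Ht1 Ht2 v.
  pose proof (scc_range F f H) as Rg. pose proof (scc_mono F f H) as Mo.
  unfold Gout. destruct (Rlt_dec v tau) as [Lt|Ge].
  - rewrite (scc_F0 F f H (v - e)) by lra. pose proof (Rg (v + e)). lra.
  - split.
    + apply fold_lower.
      * pose proof (Rg (v - e)). lra.
      * intros [z1 z2] Hp Hok. apply in_prod_iff in Hp. destruct Hp as [Hz1 Hz2].
        apply seg_ok_true in Hok. simpl in Hok |- *.
        pose proof (seg_lower F f dd H Hd v z1 z2 (HZ1 _ Hz1) (HZ1 _ Hz2) Hok).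
        pose proof (Mo (v - e) (v - dd) ltac:(lra)). lra.
    + destruct (Rle_dec 1 (v + e)) as [Big|Small].
      { rewrite (scc_F1 F f H (v + e)) by lra. pose proof (fold_le1 v (list_prod Z Z)). lra. }
      set (x0 := v + e / 2). set (u0 := x0 + F x0).
      assert (Hx0 : 0 <= x0 <= 1) by (unfold x0; lra).
      assert (Hu0 : 0 <= u0 <= 2) by (unfold u0; pose proof (Rg x0); lra).
      assert (Xu0 : Xi F u0 = x0) by (apply (Xi_unique F f H); reflexivity).
      set (P := map fst Z).
      destruct (grid_below m u0 Hm Hu0) as (i & Hi & Gi1 & Gi2).
      destruct (grid_above m u0 Hm Hu0) as (j & Hj & Gj1 & Gj2).
      assert (InP : forall k, (k <= m)%nat -> In (gpos m k) P).
      { intros k Hk. destruct (HZ2 k Hk) as (x & Hx). unfold P. apply in_map_iff. exists (gpos m k, x); auto. }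
      destruct (max_below P u0) as (a & Ha & Ha1 & Ha2). { exists (gpos m i); auto. }
      destruct (min_above P u0) as (b & Hb & Hb1 & Hb2). { exists (gpos m j); auto. }
      assert (Hai : gpos m i <= a) by auto. assert (Hbj : b <= gpos m j) by auto.
      assert (Hsep : forall z, In z Z -> fst z <= a \/ b <= fst z).
      { intros z Hz. assert (In (fst z) P) by (apply in_map; auto).
        destruct (Rle_dec (fst z) u0); [left; auto|right; apply Hb2; auto; lra]. }
      assert (Hg0 : forall k, 0 <= gpos m k) by (intros; unfold gpos; apply Rdiv_le_0_compat; [apply Rmult_le_pos; [lra|apply pos_INR]|lra]).
      assert (Hgm : gpos m j <= 2).
      { unfold gpos. apply Rmult_le_reg_r with (INR m); [lra|]. unfold Rdiv.
        rewrite Rmult_assoc, Rinv_l, Rmult_1_r by lra. apply le_INR in Hj. lra. }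
      assert (Hba : b - a <= 4 / INR m) by (unfold Rdiv in *; lra).
      apply in_map_iff in Ha. destruct Ha as (za & Eza & Hza).
      apply in_map_iff in Hb. destruct Hb as (zb & Ezb & Hzb).
      destruct (HZ1 _ Hza) as [Ga1 Ga2]. destruct (HZ1 _ Hzb) as [Gb1 Gb2].
      apply Rabs_le_inv in Ga2. apply Rabs_le_inv in Gb2. rewrite Eza in Ga1, Ga2. rewrite Ezb in Gb1, Gb2.
      destruct (Rle_dec (snd za) v) as [Ca|Ca].
      * pose proof (Xi_le F f H u0 b Hb1). 
        assert (Hzbv : v < snd zb) by (unfold x0 in Xu0; lra).
        assert (Hab : a < b).
        { destruct (Rtotal_order a b) as [L|[E|G]]; [exact L| |lra].
          assert (Eau : a = u0) by lra. rewrite Eau, Xu0 in Ga2. unfold x0 in Ga2. lra. }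
        assert (Hok : seg_ok v (za, zb) = true) by (apply seg_ok_true; simpl; lra).
        pose proof (fold_upper v (za, zb) (list_prod Z Z) ltac:(apply in_prod; auto) Hok) as FU.
        simpl in FU. eapply Rle_trans; [exact FU|].
        destruct (seg_comb v za zb ltac:(lra)) as [S1 S2].
        set (mu := (v - snd za) / (snd zb - snd za)) in *.
        assert (Hmu : 0 <= mu <= 1).
        { assert (Em : mu * (snd zb - snd za) = v - snd za) by (unfold mu; field; lra).
          split; [unfold mu; apply Rdiv_le_0_compat; lra|]. destruct (Rle_dec mu 1); auto; nra. }
        rewrite S1, Eza, Ezb.
        set (uQ := (1 - mu) * a + mu * b).
        assert (HuQ : a <= uQ <= b) by (unfold uQ; nra).
        pose proof (chord1D F f m D Z dd H Hm HD HZ1 HZ3 a b uQ ltac:(lra) Hab ltac:(lra) Hsep HuQ) as C.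
        assert (Ew : (uQ - a) / (b - a) = mu) by (unfold uQ; field; lra).
        rewrite Ew in C.
        assert (Hm2 : (b - a) / INR m <= 4 / (INR m * INR m)).
        { unfold Rdiv. rewrite Rinv_mult. apply Rle_trans with (4 * / INR m * / INR m); [|lra].
          apply Rmult_le_compat_r; [apply Rlt_le, Rinv_0_lt_compat; lra|exact Hba]. }
        assert (T1 : (1 - mu) * (Xi F a - snd za) <= (1 - mu) * dd) by (apply Rmult_le_compat_l; lra).
        assert (T2 : mu * (Xi F b - snd zb) <= mu * dd) by (apply Rmult_le_compat_l; lra).
        assert (XQ : Xi F uQ <= v + e) by lra.
        pose proof (Xi_spec F f H uQ). pose proof (Mo _ _ XQ).
        assert (E3 : (1 - mu) * (a - snd za) + mu * (b - snd zb) = uQ - v) by (rewrite S2; unfold uQ; ring).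
        rewrite E3. lra.
      * destruct (HZ2 0%nat ltac:(lia)) as (x0h & Hz0).
        assert (Eg0 : gpos m 0 = 0) by (unfold gpos; simpl; lra). rewrite Eg0 in Hz0.
        destruct (HZ1 _ Hz0) as [_ G0]. simpl in G0. rewrite (Xi_0 F f H) in G0. apply Rabs_le_inv in G0.
        assert (Hok : seg_ok v ((0, x0h), za) = true) by (apply seg_ok_true; simpl; lra).
        pose proof (fold_upper v ((0, x0h), za) (list_prod Z Z) ltac:(apply in_prod; auto) Hok) as FU.
        simpl in FU. eapply Rle_trans; [exact FU|].
        destruct (seg_comb v (0, x0h) za ltac:(simpl; lra)) as [S1 _]. simpl in S1.
        set (mu := (v - x0h) / (snd za - x0h)) in *.
        assert (Hmu : 0 <= mu <= 1).
        { assert (Em : mu * (snd za - x0h) = v - x0h) by (unfold mu; field; lra).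
          split; [unfold mu; apply Rdiv_le_0_compat; lra|]. destruct (Rle_dec mu 1); auto; nra. }
        rewrite S1, Eza.
        pose proof (Xi_le F f H a u0 Ha1). rewrite Xu0 in H0.
        pose proof (Mo (Xi F a) (v + e) ltac:(unfold x0 in H0; lra)).
        pose proof (Xi_spec F f H a). pose proof (Rg (v + e)).
        assert (a - snd za <= F (v + e) + dd) by lra.
        assert (0 - x0h <= F (v + e) + dd) by lra.
        assert (T1 : (1 - mu) * (0 - x0h) <= (1 - mu) * (F (v + e) + dd)) by (apply Rmult_le_compat_l; lra).
        assert (T2 : mu * (a - snd za) <= mu * (F (v + e) + dd)) by (apply Rmult_le_compat_l; lra).
        lra.
Qed.

Lemma tern_ok' eps F f N q : smooth_convex_cdf F f -> 0 < eps < 1 -> 0 <= q <= 2 ->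
  forall NS, (1 <= NS)%nat -> forall s l, 0 <= fst s <= snd s -> snd s <= 2 ->
  valid_run eps F (iterS (2 * N) (TernStep N) (tupd N q) NS s) l ->
  length l = (NS * (2 * N))%nat ->
  let dd := eps + eps ^ 2 / 2 + (/ 2) ^ N in
  let nodes := iterNodes (2 * N) (tnodes N) (tupd N q) NS s l in
  (forall z, In z nodes -> good_node F dd z) /\
  (forall t, fst s <= t <= snd s -> exists z, In z nodes /\
     psi F q t <= psi F q (fst z) + 2 * dd + 2 * ((2 / 3) ^ NS * (snd s - fst s))).
Proof.
  intros H He Hq NS HNS. destruct NS as [|n]; [lia|]. apply (tern_ok eps F f N q H He Hq n).
Qed.

Lemma iter_nat_all eps F L (P : nat -> strat) (g : nat -> list R -> list (R * R)) (Q : nat -> list (R * R) -> Prop) :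
  (forall k l1 l2, Q k l1 -> Q k (l1 ++ l2)) -> (forall k l1 l2, Q k l2 -> Q k (l1 ++ l2)) ->
  forall n s l, valid_run eps F (iterS L P (fun k _ => S k) n s) l -> length l = (n * L)%nat ->
  (forall k l1, (s <= k < s + n)%nat -> valid_run eps F (P k) l1 -> length l1 = L -> Q k (g k l1)) ->
  forall k, (s <= k < s + n)%nat -> Q k (iterNodes L g (fun k _ => S k) n s l).
Proof.
  intros M1 M2 n. induction n as [|n IH]; intros s l V Hl Hg k Hk; [lia|].
  cbn [iterNodes]. cbn [iterS] in V.
  destruct (valid_bind eps F _ _ _ l V) as [V1 V2]; [simpl in Hl; lia|].
  destruct (Nat.eq_dec k s) as [->|NE].
  - apply M1. apply Hg; [lia|auto|rewrite length_firstn; simpl in Hl; lia].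
  - apply M2. apply (IH (S s)); auto.
    + rewrite length_skipn. simpl in Hl. lia.
    + intros k' l1 Hk'. apply Hg. lia.
    + lia.
Qed.

Lemma iter_nat_good eps F L (P : nat -> strat) (g : nat -> list R -> list (R * R)) (Gd : R * R -> Prop) :
  forall n s l, valid_run eps F (iterS L P (fun k _ => S k) n s) l -> length l = (n * L)%nat ->
  (forall k l1, (s <= k < s + n)%nat -> valid_run eps F (P k) l1 -> length l1 = L -> forall z, In z (g k l1) -> Gd z) ->
  forall z, In z (iterNodes L g (fun k _ => S k) n s l) -> Gd z.
Proof.
  intros n. induction n as [|n IH]; intros s l V Hl Hg z Hz; [destruct Hz|].
  cbn [iterNodes] in Hz. cbn [iterS] in V.
  destruct (valid_bind eps F _ _ _ l V) as [V1 V2]; [simpl in Hl; lia|].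
  apply in_app_or in Hz. destruct Hz as [Hz|Hz].
  - eapply Hg; [|exact V1| |exact Hz]; [lia|rewrite length_firstn; simpl in Hl; lia].
  - apply (IH (S s) (skipn L l)); auto.
    + rewrite length_skipn. simpl in Hl. lia.
    + intros k' l1 Hk'. apply Hg. lia.
Qed.

Definition Tern (N : nat) (q : R) : strat := iterS (2 * N) (TernStep N) (tupd N q) (2 * N) (0, 2).
Definition ternNodes (N : nat) (q : R) (l : list R) : list (R * R) :=
  iterNodes (2 * N) (tnodes N) (tupd N q) (2 * N) (0, 2) l.
Definition PhaseA (m N : nat) : strat := iterS N (fun i => Bis (gpos m i)) (fun i _ => S i) (S m) 0%nat.
Definition nodesA (m N : nat) (l : list R) : list (R * R) :=
  iterNodes N (fun i l1 => (gpos m i, bis_res (gpos m i) l1) :: nil) (fun i _ => S i) (S m) 0%nat l.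
Definition PhaseB (m N : nat) : strat :=
  iterS ((2 * N) * (2 * N)) (fun k => Tern N (INR k / INR m)) (fun k _ => S k) (S (S m)) 0%nat.
Definition nodesB (m N : nat) (l : list R) : list (R * R) :=
  iterNodes ((2 * N) * (2 * N)) (fun k l1 => ternNodes N (INR k / INR m) l1) (fun k _ => S k) (S (S m)) 0%nat l.
Definition LA (m N : nat) : nat := (S m * N)%nat.
Definition algo (eps : R) (m N : nat) : query_alg :=
  QueryAlg (LA m N + S (S m) * ((2 * N) * (2 * N)))
    (bindS (LA m N) (PhaseA m N) (fun _ => PhaseB m N))
    (fun ans => Gout (2 * eps) (nodesA m N (firstn (LA m N) ans) ++ nodesB m N (skipn (LA m N) ans))).

Lemma gpos_range m i : 1 <= INR m -> (i <= m)%nat -> 0 <= gpos m i <= 2.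
Proof.
  intros Hm Hi. apply le_INR in Hi. pose proof (pos_INR i). unfold gpos. split.
  - apply Rdiv_le_0_compat; lra.
  - apply Rmult_le_reg_r with (INR m); [lra|]. unfold Rdiv. rewrite Rmult_assoc, Rinv_l, Rmult_1_r by lra. lra.
Qed.

Lemma nodes_props eps F f m N : smooth_convex_cdf F f -> 0 < eps < 1 -> 1 <= INR m -> (1 <= N)%nat ->
  forall ans, consistent_run eps F (algo eps m N) ans ->
  let dd := eps + eps ^ 2 / 2 + (/ 2) ^ N in
  let D := 2 * dd + 2 * ((2 / 3) ^ (2 * N) * (2 - 0)) in
  let Z := nodesA m N (firstn (LA m N) ans) ++ nodesB m N (skipn (LA m N) ans) in
  (forall z, In z Z -> good_node F dd z) /\
  (forall i, (i <= m)%nat -> exists x, In (gpos m i, x) Z) /\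
  (forall k, (k <= S m)%nat -> forall t, 0 <= t <= 2 ->
     exists z, In z Z /\ psi F (INR k / INR m) t <= psi F (INR k / INR m) (fst z) + D).
Proof.
  intros H He Hm HN ans [Hlen Hv] dd D Z.
  assert (V : valid_run eps F (bindS (LA m N) (PhaseA m N) (fun _ => PhaseB m N)) ans).
  { intros i Hi. apply Hv. simpl in Hlen |- *. lia. }
  simpl in Hlen.
  destruct (valid_bind eps F _ _ _ ans V) as [VA VB]; [lia|].
  assert (LenA : length (firstn (LA m N) ans) = (S m * N)%nat) by (rewrite length_firstn; unfold LA in *; lia).
  assert (LenB : length (skipn (LA m N) ans) = (S (S m) * ((2 * N) * (2 * N)))%nat) by (rewrite length_skipn; lia).
  assert (TK : forall k l1, (k <= S m)%nat -> valid_run eps F (Tern N (INR k / INR m)) l1 ->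
             length l1 = ((2 * N) * (2 * N))%nat ->
             (forall z, In z (ternNodes N (INR k / INR m) l1) -> good_node F dd z) /\
             (forall t, 0 <= t <= 2 -> exists z, In z (ternNodes N (INR k / INR m) l1) /\
                psi F (INR k / INR m) t <= psi F (INR k / INR m) (fst z) + D)).
  { intros k l1 Hk V1 L1.
    assert (Hq : 0 <= INR k / INR m <= 2).
    { apply le_INR in Hk. rewrite S_INR in Hk. pose proof (pos_INR k). split.
      - apply Rdiv_le_0_compat; lra.
      - apply Rmult_le_reg_r with (INR m); [lra|]. unfold Rdiv. rewrite Rmult_assoc, Rinv_l, Rmult_1_r by lra. lra. }
    unfold Tern in V1. unfold ternNodes.
    pose proof (tern_ok' eps F f N (INR k / INR m) H He Hq (2 * N) ltac:(lia) (0, 2) l1 ltac:(simpl; lra) ltac:(simpl; lra) V1 L1) as [T1 T2].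
    fold dd in T1, T2. split; auto.
    intros t Ht. destruct (T2 t ltac:(simpl; lra)) as (z & Hz & Pz). exists z. split; auto.
    unfold D. cbn [fst snd] in Pz. lra. }
  split; [|split].
  - intros z Hz. apply in_app_or in Hz. destruct Hz as [Hz|Hz].
    + revert z Hz. apply (iter_nat_good eps F N _ _ _ (S m) 0%nat _ VA LenA).
      intros k l1 Hk V1 L1 z [<-|[]]. split; [apply gpos_range; simpl; auto; lia|].
      simpl fst; simpl snd. pose proof (bis_ok eps F f H He (gpos m k) (gpos_range m k Hm ltac:(lia)) l1 V1).
      rewrite L1 in H0. exact H0.
    + revert z Hz. apply (iter_nat_good eps F _ _ _ _ (S (S m)) 0%nat _ VB LenB).
      intros k l1 Hk V1 L1. apply (TK k l1); auto; lia.
  - intros i Hi.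
    assert (Q : exists x, In (gpos m i, x) (nodesA m N (firstn (LA m N) ans))).
    { apply (iter_nat_all eps F N (fun i => Bis (gpos m i)) _ (fun k ns => exists x, In (gpos m k, x) ns)) with (n := S m) (s := 0%nat); auto.
      - intros k l1 l2 (x & Hx). exists x. apply in_or_app; auto.
      - intros k l1 l2 (x & Hx). exists x. apply in_or_app; auto.
      - intros k l1 _ _ _. exists (bis_res (gpos m k) l1). simpl; auto.
      - lia. }
    destruct Q as (x & Hx). exists x. apply in_or_app; auto.
  - intros k Hk t Ht.
    assert (Q : exists z, In z (nodesB m N (skipn (LA m N) ans)) /\
                psi F (INR k / INR m) t <= psi F (INR k / INR m) (fst z) + D).
    { apply (iter_nat_all eps F _ (fun k => Tern N (INR k / INR m)) _
        (fun k ns => exists z, In z ns /\ psi F (INR k / INR m) t <= psi F (INR k / INR m) (fst z) + D))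
        with (n := S (S m)) (s := 0%nat); auto.
      - intros k' l1 l2 (z & Hz & Pz). exists z. split; auto. apply in_or_app; auto.
      - intros k' l1 l2 (z & Hz & Pz). exists z. split; auto. apply in_or_app; auto.
      - intros k' l1 Hk' V1 L1. apply (TK k' l1); auto; lia.
      - lia. }
    destruct Q as (z & Hz & Pz). exists z. split; auto. apply in_or_app; auto.
Qed.

Lemma up_nat y : 0 <= y -> INR (Z.to_nat (up y)) = IZR (up y).
Proof.
  intros Hy. destruct (archimed y) as [A1 A2].
  assert (Hz : (0 <= up y)%Z) by (apply le_IZR; lra).
  rewrite INR_IZR_INZ, Z2Nat.id by exact Hz. reflexivity.
Qed.

Lemma params eps : 0 < eps < 1 ->
  let r := sqrt eps in
  let m := Z.to_nat (up (2 / r)) in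
  let N := Z.to_nat (up (ln (2 / eps) / ln 2)) in
  0 < r < 1 /\ 2 / r < INR m /\ INR m <= 2 / r + 1 /\ 1 <= INR m /\
  4 / (INR m * INR m) <= eps /\ (1 <= N)%nat /\ (/ 2) ^ N <= eps / 2 /\
  INR N <= 2 * (1 + ln (/ eps)).
Proof.
  intros He r m N.
  assert (Hr : 0 < r) by (apply sqrt_lt_R0; lra).
  assert (Hrr : r * r = eps) by (apply sqrt_sqrt; lra).
  assert (Hr1 : r < 1) by nra.
  assert (H2r : 2 < 2 / r).
  { apply Rmult_lt_reg_r with r; auto. unfold Rdiv. rewrite Rmult_assoc, Rinv_l by lra. nra. }
  destruct (archimed (2 / r)) as [A1 A2].
  assert (Em : INR m = IZR (up (2 / r))) by (apply up_nat; lra).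
  assert (Hl2 : / 2 < ln 2) by apply ln_lt_2.
  assert (HL : 0 < ln (/ eps)).
  { rewrite <- ln_1. apply ln_increasing; [lra|]. rewrite <- Rinv_1. apply Rinv_lt_contravar; lra. }
  assert (E2 : ln (2 / eps) = ln 2 + ln (/ eps)) by (unfold Rdiv; apply ln_mult; [lra|apply Rinv_0_lt_compat; lra]).
  set (y := ln (2 / eps) / ln 2).
  assert (Hy : 0 < y) by (unfold y; apply Rdiv_lt_0_compat; lra).
  destruct (archimed y) as [B1 B2].
  assert (EN : INR N = IZR (up y)) by (apply up_nat; lra).
  assert (HNge : (1 <= N)%nat).
  { apply INR_le. rewrite EN. simpl. assert (0 < up y)%Z by (apply lt_IZR; lra).
    apply IZR_le. lia. }
  split; [lra|]. split; [lra|]. split; [lra|]. split; [lra|].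
  split.
  { assert (Hmr : 2 < INR m * r).
    { apply Rmult_lt_reg_r with (/ r); [apply Rinv_0_lt_compat; lra|].
      rewrite Rmult_assoc, Rinv_r, Rmult_1_r by lra. unfold Rdiv in A1. lra. }
    assert (0 < INR m) by lra.
    assert (4 < INR m * INR m * eps) by (rewrite <- Hrr; nra).
    apply Rmult_le_reg_r with (INR m * INR m); [nra|]. unfold Rdiv.
    rewrite Rmult_assoc, Rinv_l, Rmult_1_r by nra. nra. }
  split; [exact HNge|]. split.
  { rewrite pow_inv.
    assert (Hp : 2 / eps < 2 ^ N).
    { apply ln_lt_inv. apply Rdiv_lt_0_compat; lra. apply pow_lt; lra.
      rewrite ln_pow by lra. rewrite EN.
      assert (y * ln 2 = ln (2 / eps)) by (unfold y; field; lra).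
      nra. }
    assert (0 < 2 ^ N) by (apply pow_lt; lra).
    assert (0 < 2 / eps) by (apply Rdiv_lt_0_compat; lra).
    apply Rle_trans with (/ (2 / eps)).
    - apply Rlt_le, Rinv_lt_contravar; [nra|lra].
    - right. field. lra. }
  { rewrite EN. assert (y <= 1 + 2 * ln (/ eps)).
    { unfold y. rewrite E2. apply Rmult_le_reg_r with (ln 2); [lra|]. unfold Rdiv.
      rewrite Rmult_assoc, Rinv_l, Rmult_1_r by lra. nra. }
    lra. }
Qed.

Theorem theorem9 :
  exists (C K : R) (k : nat),
    0 < C /\ 0 < K /\
    forall eps : R, 0 < eps < 1 ->
      exists A : query_alg,
        INR (nq A) <= K * / sqrt eps * (1 + ln (/ eps)) ^ k /\
        forall (F f : R -> R), smooth_convex_cdf F f ->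
          forall ans : list R, consistent_run eps F A ans ->
            Rbar_le (levy F (output A ans)) (Finite (C * eps)).
Proof.
  exists 10, 100, 2%nat. split; [lra|]. split; [lra|].
  intros eps He.
  destruct (params eps He) as (Hr & Hm1 & Hm2 & Hm3 & Hm4 & HN1 & HN2 & HN3).
  set (r := sqrt eps) in *.
  set (m := Z.to_nat (up (2 / r))) in *.
  set (N := Z.to_nat (up (ln (2 / eps) / ln 2))) in *.
  exists (algo eps m N). split.
  - simpl nq. unfold LA.
    repeat (rewrite plus_INR || rewrite mult_INR || rewrite S_INR). simpl INR.
    assert (HL : 0 <= ln (/ eps)).
    { rewrite <- ln_1. apply Rlt_le, ln_increasing; [lra|]. rewrite <- Rinv_1. apply Rinv_lt_contravar; lra. }
    set (L := ln (/ eps)) in *. set (n := INR N) in *. set (M := INR m) in *.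
    assert (Hn1 : 1 <= n) by (unfold n; apply le_INR in HN1; simpl in HN1; lra).
    assert (Hir : 1 <= / r).
    { rewrite <- Rinv_1. apply Rinv_le_contravar; lra. }
    assert (HM : M + 2 <= 5 * / r) by (unfold Rdiv in Hm2; lra).
    assert (Hnn : n <= n * n) by nra.
    assert (Hsum : (M + 1) * n + (M + 1 + 1) * ((1 + 1) * n * ((1 + 1) * n)) <= 5 * (M + 2) * (n * n)) by nra.
    assert (Hn2 : n * n <= 4 * ((1 + L) * (1 + L))) by nra.
    assert (0 <= M + 2) by lra.
    assert (5 * (M + 2) * (n * n) <= 5 * (5 * / r) * (4 * ((1 + L) * (1 + L)))).
    { apply Rmult_le_compat; [nra|nra| |exact Hn2]. lra. }
    simpl pow. lra.
  - intros F f H ans Hc.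
    pose proof (nodes_props eps F f m N H He Hm3 HN1 ans Hc) as (Z1 & Z2 & Z3).
    set (dd := eps + eps ^ 2 / 2 + (/ 2) ^ N) in *.
    set (D := 2 * dd + 2 * ((2 / 3) ^ (2 * N) * (2 - 0))) in *.
    assert (Hdd0 : 0 <= dd) by (unfold dd; pose proof (pow_le (/2) N ltac:(lra)); pose proof (pow2_ge_0 eps); lra).
    assert (Hdd : dd <= 2 * eps).
    { unfold dd. assert (eps ^ 2 / 2 <= eps / 2) by (simpl; nra). lra. }
    assert (H23 : (2 / 3) ^ (2 * N) <= (/ 2) ^ N).
    { rewrite pow_mult. apply pow_incr. split; [apply pow_le; lra|]. simpl; lra. }
    assert (HD0 : 0 <= D) by (unfold D; pose proof (pow_le (2/3) (2 * N) ltac:(lra)); lra).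
    assert (HD : D <= 6 * eps) by (unfold D; lra).
    assert (LC : levy_cond F (Gout (2 * eps) (nodesA m N (firstn (LA m N) ans) ++ nodesB m N (skipn (LA m N) ans))) (10 * eps)).
    { apply (levy_from_nodes F f m dd D (10 * eps) (2 * eps) _ H Hm3 Hdd0 HD0 Z1 Z2 Z3); lra. }
    unfold levy. simpl output.
    destruct (Glb_Rbar_correct (fun e => 0 <= e /\ levy_cond F (Gout (2 * eps) (nodesA m N (firstn (LA m N) ans) ++ nodesB m N (skipn (LA m N) ans))) e)) as [Hlb _].
    apply Hlb. split; [lra|exact LC].
Qed.
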